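(* Let $G$ be a finite group, $P$ a normal $p$-subgroup of $G$ and $R\trianglelefteq G$ with $R\le P$ such that $P/R$ is a chief factor of $G$ of order $p^n$ with $n>1$. Suppose that every normal subgroup $V$ of $G$ with $V<P$ satisfies $V\le R$. Let $H$ be a subgroup of $P$ with $R<RH<P$ such that $H$ is cyclic of prime order or of order $4$. If $T$ is a subgroup of $G$ with $HT=G$, then $T=G$. *)

(* Defs.v *)
From HB Require Import structures.
From mathcomp Require Import all_boot all_order all_fingroup all_solvable.
Set Implicit Arguments.
Unset Strict Implicit.
Unset Printing Implicit Defensive.

(* Main.v *)
Require Import Defs.
From HB Require Import structures.
From mathcomp Require Import all_boot all_order all_fingroup all_solvable.
Local Open Scope group_scope.

Theorem lemma4p5 (gT : finGroupType) (G P R H T : {group gT}) (p n : nat) :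
  prime p ->
  p.-group P -> P <| G ->
  R <| G -> R \subset P ->
  chief_factor G R P -> #|P : R| = (p ^ n)%N -> (1 < n)%N ->
  (forall V : {group gT}, V <| G -> V \proper P -> V \subset R) ->
  H \subset P -> R \proper R * H -> R * H \proper P ->
  cyclic H -> (prime #|H| \/ #|H| = 4%N) ->
  T \subset G -> H * T = G ->
  T = G :> {set gT}.
Proof.
move=> pr_p pP nPG nRG sRP _ _ _ minV sHP _ prRH _ _ sTG defG.
have sPG := normal_sub nPG.
have nPG' := normal_norm nPG.
have nRG' := normal_norm nRG.
have sTNP : T \subset 'N(P) := subset_trans sTG nPG'.
have sHG : H \subset G := subset_trans sHP sPG.
have defP : H * (T :&: P) = P.
  by rewrite group_modl // defG (setIidPr sPG).
set V := ('Phi(P) <*> (T :&: P))%G.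
have sVP : V \subset P by rewrite join_subG Phi_sub subsetIr.
have nVP : V <| P.
  apply: sub_der1_normal sVP.
  have sDPhi : P^`(1) \subset 'Phi(P) by rewrite (Phi_joing pP) joing_subl.
  exact: subset_trans sDPhi (joing_subl _ _).
have nVG : V <| G.
  rewrite /normal (subset_trans sVP sPG) /= -defG mulG_subG.
  rewrite (subset_trans sHP (normal_norm nVP)) /=.
  apply: normsY.
    apply: subset_trans sTG _.
    exact: normal_norm (char_normal_trans (Phi_char P) nPG).
  by rewrite normsI ?normG.
have [prVP | eVP] := boolP (V \proper P).
  have sVR := minV V nVG prVP.
  have sTPR : T :&: P \subset R := subset_trans (joing_subr _ _) sVR.
  have : P \subset R * H.
    rewrite -defP -(normC (subset_trans sHG nRG')) mulgS //.
  by move=> sPRH; move: prRH; rewrite properE sPRH andbF.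
have eV : V :=: P by apply/eqP; rewrite eqEproper sVP eVP.
have : <<T :&: P>> = P by apply: (Phi_nongen (G:=P)); exact: eV.
rewrite genGid => eTP.
have sPT : P \subset T by rewrite -eTP subsetIl.
apply/eqP; rewrite eqEsubset sTG -defG mulG_subG subxx andbT.
exact: subset_trans sHP sPT.
Qed.
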